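(* Let $\mathscr C$ be a finite skeletal locally trivial category and $k$ a field. Then $Q(k\mathscr C)=Q(\mathscr C)$; that is, $Q(k\mathscr C)$ has vertex set $\mathscr C^0$ and the set of arrows from $c$ to $d$ is $\mathrm{Irr}_{\mathscr C}(c,d)$.
   Context: $\mathscr C^0$ is the set of objects. $\mathscr C$ is locally trivial if each endomorphism monoid $\mathscr C(c,c)$ is trivial; skeletal if distinct objects are non-isomorphic. The category algebra $k\mathscr C$ has basis the arrows, product composition when defined and $0$ otherwise; the simple module at $c$ is one-dimensional. A morphism is irreducible if it is neither a split monomorphism nor a split epimorphism and whenever it factors as $gh$, either $h$ is a split monomorphism or $g$ is a split epimorphism; $\mathrm{Irr}_{\mathscr C}(c,d)$ is the set of irreducible morphisms $c\to d$. $Q(\mathscr C)$ has vertices the objects and arrows the irreducible morphisms. $Q(k\mathscr C)$ has $\dim\mathrm{Ext}^1(S,T)$ arrows from $S$ to $T$. *)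

(* Defs.v *)
From HB Require Import structures.
From mathcomp Require Import all_boot all_algebra.
Set Implicit Arguments. Unset Strict Implicit. Unset Printing Implicit Defensive.
Import GRing.Theory.
Local Open Scope ring_scope.

(* A finite (small) category: finite sets of objects and arrows.  [comp g f]
   is the composite g o f; it is only meaningful when [dom g = cod f]. *)
Record fincat := FinCat {
  obj : finType;
  arr : finType;
  dom : arr -> obj;
  cod : arr -> obj;
  idm : obj -> arr;
  comp : arr -> arr -> arr;
  dom_idm : forall c, dom (idm c) = c;
  cod_idm : forall c, cod (idm c) = c;
  dom_comp : forall g f, dom g = cod f -> dom (comp g f) = dom f;
  cod_comp : forall g f, dom g = cod f -> cod (comp g f) = cod g;
  comp_idl : forall f, comp (idm (cod f)) f = f;
  comp_idr : forall f, comp f (idm (dom f)) = f;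
  compA : forall h g f, dom h = cod g -> dom g = cod f ->
            comp h (comp g f) = comp (comp h g) f
}.

Section Cat.
Variable C : fincat.

Definition iso_obj (c d : obj C) : Prop :=
  exists f g : arr C, [/\ dom f = c, cod f = d, dom g = d, cod g = c &
                        comp g f = idm c /\ comp f g = idm d].

Definition skeletal : Prop := forall c d : obj C, iso_obj c d -> c = d.

Definition locally_trivial : Prop :=
  forall f : arr C, dom f = cod f -> f = idm (dom f).

Definition split_mono (f : arr C) : bool :=
  [exists r : arr C, [&& dom r == cod f, cod r == dom f & comp r f == idm (dom f)]].

Definition split_epi (f : arr C) : bool :=
  [exists s : arr C, [&& dom s == cod f, cod s == dom f & comp f s == idm (cod f)]].

Definition irreducible (f : arr C) : bool :=
  [&& ~~ split_mono f, ~~ split_epi f &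
   [forall g : arr C, forall h : arr C,
      ((dom g == cod h) && (comp g h == f)) ==> (split_mono h || split_epi g)]].

Definition Irr (c d : obj C) : {set arr C} :=
  [set f | [&& irreducible f, dom f == c & cod f == d]].

(* Left modules over the category algebra kC (basis = arrows, g.f = g o f if
   dom g = cod f and 0 otherwise, unit = sum of identities), given as matrix
   representations on k^n: an arrow a acts on column vectors by [rho a]. *)
Variable k : fieldType.

Definition is_kC_module (n : nat) (rho : arr C -> 'M[k]_n) : Prop :=
  (forall g f : arr C,
     rho g *m rho f = if dom g == cod f then rho (comp g f) else 0) /\
  \sum_(c : obj C) rho (idm c) = 1%:M.

Definition simple_mod (c : obj C) : arr C -> 'M[k]_1 :=
  fun a => if a == idm c then 1%:M else 0.

(* Ext^1_{kC}(M, N), computed via extensions 0 -> N -> E -> M -> 0: over a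
   field every such E is N (+) M as a vector space, with action
   a |-> [[rhoN a, delta a], [0, rhoM a]]; these are exactly the "cocycles"
   delta (module axioms for E), and equivalent extensions differ by the
   coboundaries a |-> rhoN a * phi - phi * rhoM a. *)
Definition cocycle_defect (m n : nat) (rhoM : arr C -> 'M[k]_m)
    (rhoN : arr C -> 'M[k]_n) (delta : {ffun arr C -> 'M[k]_(n, m)}) :
    {ffun (arr C * arr C) -> 'M[k]_(n, m)} * 'M[k]_(n, m) :=
  ([ffun p : arr C * arr C =>
      rhoN p.1 *m delta p.2 + delta p.1 *m rhoM p.2
      - (if dom p.1 == cod p.2 then delta (comp p.1 p.2) else 0)],
   \sum_(c : obj C) delta (idm c)).

Definition coboundary (m n : nat) (rhoM : arr C -> 'M[k]_m)
    (rhoN : arr C -> 'M[k]_n) (phi : 'M[k]_(n, m)) :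
    {ffun arr C -> 'M[k]_(n, m)} :=
  [ffun a => rhoN a *m phi - phi *m rhoM a].

Definition Z1 m n rhoM rhoN : {vspace {ffun arr C -> 'M[k]_(n, m)}} :=
  lker (linfun (@cocycle_defect m n rhoM rhoN)).

Definition B1 m n rhoM rhoN : {vspace {ffun arr C -> 'M[k]_(n, m)}} :=
  limg (linfun (@coboundary m n rhoM rhoN)).

Definition dimExt1 m n (rhoM : arr C -> 'M[k]_m) (rhoN : arr C -> 'M[k]_n) : nat :=
  (\dim (Z1 rhoM rhoN) - \dim (B1 rhoM rhoN))%N.

End Cat.

(* Main.v *)
From HB Require Import structures.
Require Import Defs.
From mathcomp Require Import all_boot all_algebra.
Set Implicit Arguments. Unset Strict Implicit. Unset Printing Implicit Defensive.
Import GRing.Theory.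
Local Open Scope ring_scope.

Lemma zmodAC6 (V : zmodType) (p q r s t u : V) :
  (p + q) + (r + s) - (t + u) = (p + r - t) + (q + s - u).
Proof. by rewrite opprD (addrACA p q) (addrACA (p + r)). Qed.

Section L.
Variables (C : fincat) (k : fieldType) (m n : nat) (rhoM : arr C -> 'M[k]_m) (rhoN : arr C -> 'M[k]_n).

Lemma cocycle_defect_lin : linear (@cocycle_defect C k m n rhoM rhoN).
Proof.
move=> a x y; rewrite /cocycle_defect; congr (_, _).
  apply/ffunP => p; rewrite !ffunE mulmxDr mulmxDl -scalemxAr -scalemxAl.
  case: ifP => _.
    by rewrite zmodAC6 scalerBr scalerDr.
  by rewrite !subr0 scalerDr addrACA.
rewrite /= scaler_sumr -big_split /=; apply: eq_bigr => i _.
by rewrite !ffunE.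
Qed.

HB.instance Definition _ := GRing.isLinear.Build k _ _ _ (@cocycle_defect C k m n rhoM rhoN) cocycle_defect_lin.

Lemma coboundary_lin : linear (@coboundary C k m n rhoM rhoN).
Proof.
move=> a x y; apply/ffunP => b; rewrite !ffunE mulmxDr mulmxDl -scalemxAr -scalemxAl.
by rewrite opprD addrACA scalerBr.
Qed.

HB.instance Definition _ := GRing.isLinear.Build k _ _ _ (@coboundary C k m n rhoM rhoN) coboundary_lin.

Lemma memZ1 d : (d \in Z1 rhoM rhoN) = (cocycle_defect rhoM rhoN d == 0).
Proof. by rewrite memv_ker lfunE. Qed.


End L.
Section Cat.
Variable C : fincat.
Hypotheses (Hsk : skeletal C) (Hlt : locally_trivial C).

Lemma split_id (r f : arr C) : dom r = cod f -> Defs.comp r f = idm (dom f) ->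
  f = idm (dom f) /\ r = idm (dom r).
Proof.
move=> drf rf.
have cr : cod r = dom f by rewrite -(cod_comp drf) rf cod_idm.
have dfr : dom f = cod r by [].
have fr : Defs.comp f r = idm (cod f).
  by rewrite (Hlt (f := Defs.comp f r)) ?(dom_comp dfr) ?(cod_comp dfr) // -drf.
have xy : dom f = cod f.
  by apply: Hsk; exists f, r; split => //; split.
by split; [apply: Hlt | apply: Hlt; rewrite drf -xy -cr].
Qed.

Lemma split_monoP (f : arr C) : split_mono f -> f = idm (dom f).
Proof. by case/existsP => r /and3P[/eqP d /eqP _ /eqP e]; case: (split_id d e). Qed.

Lemma split_epiP (f : arr C) : split_epi f -> f = idm (dom f).
Proof.
case/existsP => s /and3P[/eqP d /eqP c /eqP e].
have ds : dom f = cod s by rewrite c.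
have e' : Defs.comp f s = idm (dom s) by rewrite e -d.
by case: (split_id ds e').
Qed.

Lemma idm_split_mono (x : obj C) : split_mono (idm x).
Proof.
apply/existsP; exists (idm x); rewrite dom_idm cod_idm !eqxx /=.
by have := comp_idl (idm x); rewrite cod_idm => ->.
Qed.

Lemma idm_split_epi (x : obj C) : split_epi (idm x).
Proof.
apply/existsP; exists (idm x); rewrite dom_idm cod_idm !eqxx /=.
by have := comp_idl (idm x); rewrite cod_idm => ->.
Qed.

Lemma idm_inj : injective (@idm C).
Proof. by move=> x y e; rewrite -(dom_idm x) e dom_idm. Qed.

Lemma irr_nid (f : arr C) : irreducible f -> f != idm (dom f).
Proof. by case/and3P => /negP sm _ _; apply/eqP => e; apply: sm; rewrite e idm_split_mono. Qed.

Lemma irr_nid' (f : arr C) x : irreducible f -> f != idm x.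
Proof. by move=> /irr_nid; apply: contra => /eqP e; rewrite {2}e dom_idm e. Qed.

Lemma irr_ndc (f : arr C) : irreducible f -> dom f != cod f.
Proof. by move/irr_nid; apply: contra => /eqP e; apply/eqP/Hlt. Qed.


Lemma comp_eq_idm (g f : arr C) x : dom g = cod f -> Defs.comp g f = idm x ->
  f = idm x /\ g = idm x.
Proof.
move=> dgf e.
have dfx : dom f = x by rewrite -(dom_comp dgf) e dom_idm.
have e' : Defs.comp g f = idm (dom f) by rewrite dfx.
case: (split_id dgf e') => ef eg.
split; first by rewrite ef dfx.
by rewrite eg dgf ef cod_idm dfx.
Qed.

Lemma compii (x : obj C) : Defs.comp (idm x) (idm x) = idm x.
Proof. by have := comp_idl (idm x); rewrite cod_idm. Qed.

Variable k : fieldType.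

Lemma simple_module (x : obj C) : is_kC_module (@simple_mod C k x).
Proof.
split.
  move=> g f; rewrite /simple_mod.
  case: (eqVneq g (idm x)) => [->|gn]; case: (eqVneq f (idm x)) => [->|fn].
  - by rewrite dom_idm cod_idm eqxx compii eqxx mulmx1.
  - rewrite mulmx0; case: ifP => // /eqP dgf; case: ifP => // /eqP e.
    by case: (comp_eq_idm dgf e) => ef _; rewrite ef eqxx in fn.
  - rewrite mul0mx; case: ifP => // /eqP dgf; case: ifP => // /eqP e.
    by case: (comp_eq_idm dgf e) => _ eg; rewrite eg eqxx in gn.
  - rewrite mul0mx; case: ifP => // /eqP dgf; case: ifP => // /eqP e.
    by case: (comp_eq_idm dgf e) => _ eg; rewrite eg eqxx in gn.
rewrite /simple_mod (bigD1 x) //= eqxx big1 ?addr0 // => y /negbTE ny.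
by rewrite (inj_eq idm_inj) ny.
Qed.

Section Gen.
Variables (m n : nat) (rhoM : arr C -> 'M[k]_m) (rhoN : arr C -> 'M[k]_n).

Lemma Z1P (d : {ffun arr C -> 'M[k]_(n, m)}) :
  reflect ((forall a b, rhoN a *m d b + d a *m rhoM b =
             if dom a == cod b then d (Defs.comp a b) else 0) /\
           \sum_x d (idm x) = 0)
          (d \in Z1 rhoM rhoN).
Proof.
rewrite memZ1; apply: (iffP eqP).
  move=> H; split; last by have := congr1 (fun q : {ffun arr C * arr C -> 'M[k]_(n, m)} * 'M[k]_(n, m) => q.2) H.
  move=> a b; have := congr1 (fun q : {ffun arr C * arr C -> 'M[k]_(n, m)} * 'M[k]_(n, m) => q.1 (a, b)) H; rewrite /= !ffunE /=.
  by move/eqP; rewrite subr_eq0 => /eqP.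
case=> H1 H2; rewrite /cocycle_defect H2; congr (_, _).
by apply/ffunP => p; rewrite !ffunE H1 subrr.
Qed.

Lemma cobound_Z1 phi : is_kC_module rhoM -> is_kC_module rhoN ->
  coboundary rhoM rhoN phi \in Z1 rhoM rhoN.
Proof.
case=> HM SM [HN SN]; apply/Z1P; split.
  move=> a b; rewrite /coboundary !ffunE mulmxBr mulmxBl !mulmxA addrA subrK.
  rewrite -(mulmxA phi) HM HN; case: ifP => _; last by rewrite mul0mx mulmx0 subrr.
  by [].
rewrite /coboundary; under eq_bigr do rewrite ffunE.
by rewrite sumrB -mulmx_suml -mulmx_sumr SM SN mul1mx mulmx1 subrr.
Qed.

End Gen.


Notation rho := (@simple_mod C k).

Lemma rho_nid y (x : arr C) : x != idm (dom x) -> rho y x = 0.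
Proof.
move=> nx; rewrite /simple_mod; case: eqP => // e.
by rewrite {2}e dom_idm -e eqxx in nx.
Qed.

Lemma rho_idm y x : rho y (idm x) = if x == y then 1%:M else 0.
Proof. by rewrite /simple_mod (inj_eq idm_inj). Qed.

Section CD.
Variables c d : obj C.

Lemma support (D : {ffun arr C -> 'M[k]_(1, 1)}) :
  D \in Z1 (rho c) (rho d) -> (c = d \/ D (idm d) = 0) ->
  (forall y, D (idm y) = 0) /\ (forall x, D x != 0 -> x \in Irr c d).
Proof.
move=> /Z1P[H Hs] hyp.
have Hi x : rho d (idm (cod x)) *m D x + D (idm (cod x)) *m rho c x = D x.
  by rewrite H dom_idm eqxx comp_idl.
have Hii x : rho d x *m D (idm (dom x)) + D x *m rho c (idm (dom x)) = D x.
  by rewrite H cod_idm eqxx comp_idr.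
have oth y : y != c -> D (idm y) = 0.
  move=> nyc; have := Hi (idm y); rewrite cod_idm !rho_idm (negbTE nyc) mulmx0.
  case: eqP => [yd|_]; last by rewrite mul0mx addr0.
  case: hyp => [cd|Hd]; first by rewrite yd cd eqxx in nyc.
  by rewrite yd.
have Hid y : D (idm y) = 0.
  case: (eqVneq y c) => [->|/oth //].
  case: (eqVneq c d) => [cd|ncd].
    have := Hi (idm c); rewrite cod_idm !rho_idm cd eqxx mul1mx mulmx1.
    by move/eqP; rewrite -subr_eq0 addrK => /eqP.
  move: Hs; rewrite (bigD1 c) //= big1 ?addr0 // => y' /oth //.
split=> // x nz.
have nid : x != idm (dom x) by apply: contra nz => /eqP ->; rewrite Hid.
have cx : cod x = d.
  apply/eqP; apply: contraNT nz => ncd.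
  by rewrite -Hi rho_idm (negbTE ncd) Hid !mul0mx addr0.
have dx : dom x = c.
  apply/eqP; apply: contraNT nz => ndc.
  by rewrite -Hii rho_idm (negbTE ndc) Hid rho_nid // !mulmx0 addr0.
rewrite inE dx cx !eqxx !andbT; apply/and3P; split.
- by apply: contra nid => /split_monoP/eqP.
- by apply: contra nid => /split_epiP/eqP.
apply/forallP => g; apply/forallP => h; apply/implyP => /andP[/eqP ghc /eqP ghx].
apply/negPn/negP => /norP[nsm nse].
have nh : h != idm (dom h) by apply: contra nsm => /eqP ->; apply: idm_split_mono.
have ng : g != idm (dom g) by apply: contra nse => /eqP ->; apply: idm_split_epi.
move: nz; have := H g h; rewrite ghc eqxx ghx => <-.
by rewrite (rho_nid _ ng) (rho_nid _ nh) mul0mx mulmx0 addr0 eqxx.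
Qed.

End CD.

Definition ev (a : arr C) : {ffun arr C -> 'M[k]_(1, 1)} :=
  [ffun x => if x == a then 1%:M else 0].

Lemma one11_neq0 : (1%:M : 'M[k]_(1, 1)) != 0.
Proof.
apply/eqP => h; have := congr1 (fun M : 'M[k]_(1,1) => M 0 0) h.
by rewrite /= !mxE /= => /eqP; rewrite oner_eq0.
Qed.

Lemma span_vanish (X : seq {ffun arr C -> 'M[k]_(1, 1)}) a :
  (forall v, v \in X -> v a = 0) -> forall w, w \in <<X>>%VS -> w a = 0.
Proof.
move=> H w wX.
have := coord_span (X := in_tuple X) wX => ->.
rewrite sum_ffunE big1 // => i _; rewrite ffunE.
by rewrite (H _ (mem_nth 0 (ltn_ord i))) scaler0.
Qed.

Lemma free_ev (s : seq (arr C)) : uniq s -> free (map ev s).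
Proof.
elim: s => [|a s IH] /=; first by rewrite nil_free.
case/andP => nas us; rewrite free_cons IH // andbT.
apply/negP => /(span_vanish (a := a)) h.
have : ev a a = 0.
  apply: h => v /mapP[b bs ->]; rewrite ffunE.
  by case: eqP => // ab; rewrite ab bs in nas.
by rewrite ffunE eqxx; apply/eqP; apply: one11_neq0.
Qed.

Lemma support_span (A : {set arr C}) (D : {ffun arr C -> 'M[k]_(1, 1)}) :
  (forall x, D x != 0 -> x \in A) -> D \in <<map ev (enum A)>>%VS.
Proof.
move=> H.
have -> : D = \sum_(a in A) (D a 0 0) *: ev a.
  apply/ffunP => x; rewrite sum_ffunE.
  case: (boolP (x \in A)) => xA.
    rewrite (bigD1 x) //= big1 ?addr0.
      by rewrite !ffunE eqxx scalemx1 -mx11_scalar.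
    by move=> a /andP[_ nxa]; rewrite !ffunE eq_sym (negbTE nxa) scaler0.
  rewrite big1; last first.
    move=> a aA; rewrite !ffunE; case: eqP => [xa|_]; last by rewrite scaler0.
    by rewrite xa aA in xA.
  by apply/eqP; apply: contraNT xA; apply: H.
apply: memv_suml => a aA; apply: memvZ; apply: memv_span.
by apply: map_f; rewrite mem_enum.
Qed.

Lemma irr_fact2 (a g h : arr C) : irreducible a -> dom g = cod h ->
  Defs.comp g h = a ->
  (h = idm (dom h) /\ g = a) \/ (g = idm (dom g) /\ h = a).
Proof.
move=> ir dgh e.
have : split_mono h || split_epi g.
  case/and3P: ir => _ _ /forallP/(_ g)/forallP/(_ h)/implyP; apply.
  by rewrite dgh e !eqxx.
case/orP => [/split_monoP eh|/split_epiP eg].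
  left; split=> //; rewrite -e.
  have dh : dom g = dom h by rewrite dgh {1}eh cod_idm.
  by rewrite eh -dh comp_idr.
right; split=> //; rewrite -e {1}eg dgh.
by rewrite comp_idl.
Qed.

Lemma evZ c d (a : arr C) : a \in Irr c d -> ev a \in Z1 (rho c) (rho d).
Proof.
rewrite inE => /and3P[ir /eqP da /eqP ca].
have nid x := irr_nid' x ir.
apply/Z1P; split; last first.
  by rewrite big1 // => x _; rewrite ffunE; case: eqP => // e; have := nid x; rewrite e eqxx.
move=> g h; rewrite !ffunE.
have ranid : forall y, rho y a = 0 by move=> y; rewrite rho_nid // irr_nid.
case: (eqVneq h a) => [->|nha].
  rewrite ranid mulmx0 addr0 mulmx1 /simple_mod.
  case: (eqVneq g (idm d)) => [->|ngd].
    by rewrite dom_idm ca eqxx -ca comp_idl eqxx.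
  case: ifP => // /eqP dga; case: ifP => // /eqP e.
  case: (irr_fact2 ir dga e) => [[ea _]|[eg _]]; first by have := irr_nid ir; rewrite -ea eqxx.
  by rewrite eg dga ca eqxx in ngd.
rewrite mulmx0 add0r.
case: (eqVneq g a) => [->|nga].
  rewrite mul1mx /simple_mod.
  case: (eqVneq h (idm c)) => [->|nhc].
    by rewrite cod_idm da eqxx -da comp_idr eqxx.
  case: ifP => // /eqP dah; case: ifP => // /eqP e.
  case: (irr_fact2 ir dah e) => [[eh _]|[ea _]]; last by have := irr_nid ir; rewrite -ea eqxx.
  have ch : cod h = dom h by rewrite {1}eh cod_idm.
  by rewrite eh -ch -dah da eqxx in nhc.
rewrite mul0mx; case: ifP => // /eqP dgh; case: ifP => // /eqP e.
by case: (irr_fact2 ir dgh e) => [[_ ga]|[_ ha]]; [rewrite ga eqxx in nga | rewrite ha eqxx in nha].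
Qed.

Lemma dimExt_eq c d : dimExt1 (rho c) (rho d) = #|Irr c d|.
Proof.
rewrite /dimExt1.
case: (eqVneq c d) => [<-|ncd].
  have Irr0 : Irr c c = set0.
    apply/setP => x; rewrite !inE; apply/negbTE/and3P => [[ir /eqP dx /eqP cx]].
    by move: (irr_ndc ir); rewrite dx cx eqxx.
  have Z0 : Z1 (rho c) (rho c) = 0%VS.
    apply/eqP; rewrite -subv0; apply/subvP => D HD; rewrite memv0.
    have [_ Hs] := support HD (or_introl erefl).
    apply/eqP/ffunP => x; rewrite ffunE; apply/eqP; apply: contraT => nz.
    by have := Hs x nz; rewrite Irr0 inE.
  by rewrite Z0 dimv0 sub0n Irr0 cards0.
set u := coboundary (rho c) (rho d) 1%:M.
have ud : u (idm d) = 1%:M.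
  by rewrite ffunE !rho_idm eqxx eq_sym (negbTE ncd) mulmx1 mulmx0 subr0.
have uZ : u \in Z1 (rho c) (rho d) by apply: cobound_Z1; apply: simple_module.
have ZX : Z1 (rho c) (rho d) = <<u :: map ev (enum (Irr c d))>>%VS.
  apply/eqP; rewrite eqEsubv; apply/andP; split.
    apply/subvP => D HD.
    set l := D (idm d) 0 0.
    have HD' : D - l *: u \in Z1 (rho c) (rho d) by rewrite memvB // memvZ.
    have D'd : (D - l *: u) (idm d) = 0.
      have sc : forall v : {ffun arr C -> 'M[k]_(1,1)}, (D - l *: v) (idm d) = D (idm d) - l *: v (idm d) by move=> v; rewrite !ffunE.
      by rewrite sc ud scalemx1 -mx11_scalar subrr.
    have [_ Hs] := support HD' (or_intror D'd).
    have := support_span Hs => Hsp.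
    rewrite span_cons; have -> : D = l *: u + (D - l *: u) by rewrite addrC subrK.
    by apply: memv_add => //; rewrite memvZ // memv_line.
  apply/span_subvP => v; rewrite inE => /orP[/eqP->|/mapP[a]] //.
  by rewrite mem_enum => aI ->; apply: evZ.
have freeX : free (u :: map ev (enum (Irr c d))).
  rewrite free_cons free_ev ?enum_uniq // andbT.
  apply/negP => /(span_vanish (a := idm d)) h.
  have : u (idm d) = 0.
    apply: h => v /mapP[a]; rewrite mem_enum inE => /and3P[ir _ _] ->.
    rewrite ffunE; case: eqP => // e; have := irr_nid' d ir.
    by rewrite -e eqxx.
  by rewrite ud; apply/eqP; apply: one11_neq0.
have dZ : \dim (Z1 (rho c) (rho d)) = (#|Irr c d|).+1.
  by rewrite ZX (eqP freeX) /= size_map cardE.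
have dB : \dim (B1 (rho c) (rho d)) = 1%N.
  apply/eqP; rewrite eqn_leq; apply/andP; split.
    rewrite /B1; apply: leq_trans (leq_addl (\dim (fullv :&: lker (linfun (coboundary (rho c) (rho d))))) _) _.
    by rewrite limg_ker_dim dimvf.
  have uB : u \in B1 (rho c) (rho d).
    by rewrite /B1 -[u]lfunE memv_img ?memvf.
  move: uB; rewrite memvE => /dimvS; rewrite dim_vline.
  by apply: leq_trans; rewrite lt0b; apply/eqP => u0; move: ud; rewrite u0 ffunE => /esym/eqP; rewrite (negbTE one11_neq0).
by rewrite dZ dB subn1.
Qed.

End Cat.

Theorem mainTheorem8 (C : fincat) (k : fieldType) :
  skeletal C -> locally_trivial C ->
  (forall c : obj C, is_kC_module (@simple_mod C k c)) /\
  forall c d : obj C,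
    dimExt1 (@simple_mod C k c) (@simple_mod C k d) = #|Irr c d|.
Proof.
move=> Hsk Hlt; split => [c|c d]; first exact: simple_module.
exact: dimExt_eq.
Qed.
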